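(* Let $G$ be a finite simple undirected graph with $\alpha(G)=k$. Suppose $\{v_1,\ldots,v_k\}$ is an independent set of $G$ and $S=\{S_1,\ldots,S_k\}$ is a total clique covering of $G$ such that, for each $i=1,\ldots,k$, $S_i$ is the only member of $S$ containing $v_i$. Then $\theta_t(G)=\alpha(G)=k$ and $S$ is the only total clique covering of $G$ consisting of exactly $k$ cliques.
   Context: $\alpha(G)$ is the maximum size of an independent set of $G$. A clique is a set of pairwise adjacent vertices; a set $S$ of cliques of $G$ is a total clique covering if every vertex lies in some member of $S$ and every edge has both endpoints in some member of $S$. $\theta_t(G)$ is the minimum size of a total clique covering of $G$. *)

(* Defs.v *)
(* A finite simple graph: vertex type T : finType,
   adjacency e : rel T, assumed symmetric and irreflexive in the theorem. *)
From mathcomp Require Import all_boot.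
Set Implicit Arguments. Unset Strict Implicit. Unset Printing Implicit Defensive.

Section Graph.
Variables (T : finType) (e : rel T).

Definition independent (A : {set T}) : bool :=
  [forall x in A, forall y in A, ~~ e x y].

Definition clique (A : {set T}) : bool :=
  [forall x in A, forall y in A, (x != y) ==> e x y].

Definition total_clique_covering (S : {set {set T}}) : bool :=
  [&& [forall C in S, clique C],
      [forall x, exists C in S, x \in C] &
      [forall x, forall y, e x y ==> [exists C in S, (x \in C) && (y \in C)]]].

Definition alpha : nat := \max_(A : {set T} | independent A) #|A|.

(* The default value
   #|{set T}| is an upper bound on the size of any set of vertex subsets, and
   a total clique covering always exists (all cliques), so this is the min. *)
Definition theta_t : nat :=
  \big[minn/#|{set T}|]_(S : {set {set T}} | total_clique_covering S) #|S|.

End Graph.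

(* Main.v *)
Require Import Defs.
From mathcomp Require Import all_boot.
Set Implicit Arguments. Unset Strict Implicit. Unset Printing Implicit Defensive.

Lemma bigmin_le (I : eqType) (r : seq I) (P : pred I) (F : I -> nat) idx x :
  x \in r -> P x -> \big[minn/idx]_(i <- r | P i) F i <= F x.
Proof.
elim: r => [//|y r IH]; rewrite inE big_cons => /orP [/eqP <-|xr] Px.
  by rewrite Px geq_minl.
case: (P y); last exact: IH.
by rewrite geq_min (IH xr Px) orbT.
Qed.

Section Main.
Variables (T : finType) (e : rel T) (e_sym : symmetric e) (e_irr : irreflexive e)
  (k : nat) (v : 'I_k -> T) (v_inj : injective v)
  (v_ind : independent e [set v i | i in 'I_k]).

Lemma clique_uniq (C : {set T}) i j : clique e C -> v i \in C -> v j \in C -> i = j.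
Proof.
have mv l : v l \in [set v i | i in 'I_k] by apply/imsetP; exists l.
move=> /forallP cC vi vj; apply/eqP; apply/negPn/negP => ij.
have := forallP (implyP (cC (v i)) vi) (v j).
have -> : v i != v j by apply: contra ij => /eqP/v_inj ->.
rewrite vj /= => eij.
have /forallP := implyP (forallP v_ind (v i)) (mv i).
move=> /(_ (v j)) /implyP /(_ (mv j)).
by rewrite eij.
Qed.

Variable (S' : {set {set T}}) (cov : total_clique_covering e S').

Definition f i := odflt set0 [pick C in S' | v i \in C].

Lemma f_spec i : f i \in S' /\ v i \in f i.
Proof.
case/and3P: cov => _ /forallP /(_ (v i)) /existsP [C /andP [CS vC]] _.
rewrite /f; case: pickP => [D /andP [DS vD] //|/(_ C)].
by rewrite CS vC.
Qed.

Lemma cliqueS' C : C \in S' -> clique e C.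
Proof. by case/and3P: cov => /forallP cl _ _ /(implyP (cl C)). Qed.

Lemma f_inj : injective f.
Proof.
move=> i j fij; have [Si vi] := f_spec i; have [_ vj] := f_spec j.
rewrite -fij in vj; exact: clique_uniq (cliqueS' Si) vi vj.
Qed.

Lemma card_ge : k <= #|S'|.
Proof.
have <- : #|[set f i | i in 'I_k]| = k by rewrite card_imset ?card_ord //; exact: f_inj.
apply: subset_leq_card; apply/subsetP => C /imsetP [i _ ->]; exact: (f_spec i).1.
Qed.


End Main.

Theorem proposition1 (T : finType) (e : rel T)
    (e_sym : symmetric e) (e_irr : irreflexive e)
    (k : nat) (hk : alpha e = k)
    (v : 'I_k -> T) (v_inj : injective v)
    (v_ind : independent e [set v i | i in 'I_k])
    (S : 'I_k -> {set T})
    (S_cov : total_clique_covering e [set S i | i in 'I_k])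
    (S_v : forall i, v i \in S i)
    (S_only : forall i (C : {set T}), C \in [set S j | j in 'I_k] ->
                v i \in C -> C = S i) :
  theta_t e = alpha e /\ alpha e = k /\
  (forall S' : {set {set T}}, total_clique_covering e S' -> #|S'| = k ->
     S' = [set S i | i in 'I_k]).
Proof.
have mS l : S l \in [set S i | i in 'I_k] by apply/imsetP; exists l.
have Sinj : injective S.
  move=> i j Sij; have := S_v j; rewrite -Sij => vj.
  have cl := cliqueS' S_cov (mS i).
  exact (clique_uniq v_inj v_ind cl (S_v i) vj).
have cardS : #|[set S i | i in 'I_k]| = k by rewrite card_imset ?card_ord.
have Hth : theta_t e = k.
  apply/eqP; rewrite eqn_leq; apply/andP; split.
    rewrite -{1}cardS; apply: bigmin_le => //; exact: mem_index_enum.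
  apply: (big_ind (fun x => k <= x)).
  - by rewrite -cardS max_card.
  - by move=> x y hx hy; rewrite leq_min hx hy.
  - move=> S' cS'; exact (card_ge v_inj v_ind cS').
split; first by rewrite Hth hk.
split=> // S' cS' cardS'.
have imf : [set f v S' i | i in 'I_k] = S'.
  apply/eqP; rewrite eqEcard; apply/andP; split.
    apply/subsetP => C /imsetP [i _ ->]; exact: (f_spec v cS' i).1.
  by rewrite cardS' card_imset ?card_ord //; exact (f_inj v_inj v_ind cS').
rewrite -imf; apply: eq_in_imset => i _.
have [fS vf] := f_spec v cS' i.
have only' : forall D, D \in S' -> v i \in D -> D = f v S' i.
  move=> D DS; have /imsetP [j _ ->] : D \in [set f v S' i | i in 'I_k] by rewrite imf.
  move=> vj.
  have [_ vfj] := f_spec v cS' j.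
  have Hij :=  (clique_uniq v_inj v_ind (cliqueS' cS' (f_spec v cS' j).1) vj vfj). by rewrite Hij.
apply/setP => x; apply/idP/idP => hx.
- case: (eqVneq x (v i)) => [->|xv]; first exact: S_v.
  have exy : e (v i) x.
    have /forallP := implyP (forallP (cliqueS' cS' fS) (v i)) vf.
    by move=> /(_ x) /implyP /(_ hx) /implyP; apply; rewrite eq_sym.
  case/and3P: S_cov => _ _ /forallP /(_ (v i)) /forallP /(_ x) /implyP /(_ exy).
  case/existsP => C /andP [CS /andP [vC xC]].
  by rewrite -(S_only i C CS vC).
- case: (eqVneq x (v i)) => [->//|xv].
  have exy : e (v i) x.
    have Si := mS i.
    have /forallP := implyP (forallP (cliqueS' S_cov Si) (v i)) (S_v i).
    by move=> /(_ x) /implyP /(_ hx) /implyP; apply; rewrite eq_sym.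
  case/and3P: cS' => _ _ /forallP /(_ (v i)) /forallP /(_ x) /implyP /(_ exy).
  case/existsP => C /andP [CS /andP [vC xC]].
  by rewrite -(only' C CS vC).
Qed.
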